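(* Let $\lambda_0>1$. There exists $C_0>0$ depending only on $\lambda_0$ such that for every $\lambda\ge\lambda_0$ and every $k\ge1$: $$\frac{k}{|z_n(k)+1|}\le\begin{cases}2\sqrt2\,k&\text{for all }n\in\mathbb N_0,\\ 2\sqrt2\left(\frac{2}{\lambda_0}+1\right)\dfrac{k}{n+1}&\text{for }n>\lambda k^2,\\ C_0\dfrac{k}{n+1}&\text{for }n\ge\lambda k,\end{cases}$$ and moreover $\dfrac{|z_n(k)+1|}{k}\le1+\dfrac nk$ for all $n\in\mathbb N_0$.
   Context: For $n\in\mathbb N_0$ let $h_n^{(1)}$ be the spherical Hankel function of the first kind of order $n$, and for $r>0$ set $z_n(r):=r\,\dfrac{(h_n^{(1)})'(r)}{h_n^{(1)}(r)}$. *)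

(* Defs.v *)
From Stdlib Require Import Reals Lra Lia Factorial.
Open Scope R_scope.

Record Cx := mkCx { re : R; im : R }.

Definition Cadd (z w : Cx) : Cx := mkCx (re z + re w) (im z + im w).
Definition Cmul (z w : Cx) : Cx :=
  mkCx (re z * re w - im z * im w) (re z * im w + im z * re w).
Definition Cscal (a : R) (z : Cx) : Cx := mkCx (a * re z) (a * im z).
Definition Cinv (z : Cx) : Cx :=
  let d := re z ^ 2 + im z ^ 2 in mkCx (re z / d) (- im z / d).
Definition Cmod (z : Cx) : R := sqrt (re z ^ 2 + im z ^ 2).
Definition Czero : Cx := mkCx 0 0.
Definition Cone : Cx := mkCx 1 0.
Definition Cmi : Cx := mkCx 0 (-1).
Fixpoint Cpow (z : Cx) (n : nat) : Cx :=
  match n with O => Cone | S m => Cmul z (Cpow z m) end.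
Definition Cexpi (r : R) : Cx := mkCx (cos r) (sin r).

Fixpoint Csum (f : nat -> Cx) (n : nat) : Cx :=
  match n with O => f O | S m => Cadd (Csum f m) (f (S m)) end.

(* a_k(n+1/2) = (n+k)! / (2^k k! (n-k)!) *)
Definition hank_a (n k : nat) : R :=
  INR (fact (n + k)) / (2 ^ k * INR (fact k) * INR (fact (n - k))).

(* Spherical Hankel function of the first kind (DLMF 10.49.6):
   h_n^(1)(r) = e^{ir} sum_{k=0}^n i^{k-n-1} a_k(n+1/2) r^{-(k+1)},
   with i^{k-n-1} = (-i)^{n+1-k}. *)
Definition hankel1 (n : nat) (r : R) : Cx :=
  Cmul (Cexpi r)
    (Csum (fun k => Cscal (hank_a n k / r ^ (k + 1)) (Cpow Cmi (n + 1 - k))) n).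

(* z_n(r) = r h'(r) / h(r), where hp = h_n'(r) is supplied *)
Definition zn_of (n : nat) (r : R) (hp : Cx) : Cx :=
  Cscal r (Cmul hp (Cinv (hankel1 n r))).

(* Main.v *)
Require Import Defs.
From Stdlib Require Import Reals Lra Lia Factorial.
Open Scope R_scope.

Lemma Cx_ext z w : re z = re w -> im z = im w -> z = w.
Proof. destruct z, w; simpl; intros; subst; reflexivity. Qed.

Definition term (n k : nat) (r : R) : Cx :=
  Cscal (hank_a n k / r ^ (k + 1)) (Cpow Cmi (n + 1 - k)).
Definition Pn (n : nat) (r : R) : Cx := Csum (fun k => term n k r) n.

Lemma Csum_ext f g n : (forall k, (k <= n)%nat -> f k = g k) -> Csum f n = Csum g n.
Proof.
  induction n; intros H; simpl. apply H; lia.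
  rewrite IHn by (intros; apply H; lia). rewrite (H (S n)) by lia. reflexivity.
Qed.

Lemma Csum_add f g n : Csum (fun k => Cadd (f k) (g k)) n = Cadd (Csum f n) (Csum g n).
Proof.
  induction n; simpl. reflexivity. rewrite IHn. apply Cx_ext; simpl; ring.
Qed.

Lemma Csum_scal c f n : Csum (fun k => Cscal c (f k)) n = Cscal c (Csum f n).
Proof.
  induction n; simpl. reflexivity. rewrite IHn. apply Cx_ext; simpl; ring.
Qed.

Lemma Csum_shift f n : Csum f (S n) = Cadd (f O) (Csum (fun k => f (S k)) n).
Proof.
  induction n. reflexivity.
  change (Csum f (S (S n))) with (Cadd (Csum f (S n)) (f (S (S n)))).
  rewrite IHn. simpl. apply Cx_ext; simpl; ring.
Qed.

Definition ttm (n k : nat) (r : R) : Cx := if (k <=? n)%nat then term n k r else Czero.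

Lemma Csum_tt n r m : Csum (fun k => ttm n k r) (n + m) = Pn n r.
Proof.
  induction m. rewrite Nat.add_0_r. unfold Pn. apply Csum_ext. intros k Hk.
  unfold ttm. destruct (Nat.leb_spec k n); [reflexivity|lia].
  rewrite Nat.add_succ_r. simpl. rewrite IHm. unfold ttm.
  destruct (Nat.leb_spec (S (n+m)) n); [lia|]. apply Cx_ext; simpl; ring.
Qed.

Lemma Cpow_Cmi_2 m : Cpow Cmi (S (S m)) = Cscal (-1) (Cpow Cmi m).
Proof. simpl. apply Cx_ext; simpl; ring. Qed.

Lemma hank_a_0 n : hank_a n 0 = 1.
Proof. unfold hank_a. rewrite Nat.add_0_r, Nat.sub_0_r. simpl. field. apply INR_fact_neq_0. Qed.

Lemma fS m : INR (fact (S m)) = (INR m + 1) * INR (fact m).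
Proof. rewrite fact_simpl, mult_INR, S_INR. ring. Qed.

Lemma hank_rec n k : (k + 1 <= n)%nat ->
  hank_a (n+2) (k+1) = (2*INR n+3) * hank_a (n+1) k + hank_a n (k+1).
Proof.
  intros H. destruct (Nat.le_exists_sub (k+1) n H) as [d [-> _]].
  unfold hank_a.
  replace (d + (k+1) + 2 + (k+1))%nat with (S (S (S (d+k+1+k))))%nat by lia.
  replace (d + (k+1) + 1 + k)%nat with (S (d+k+1+k))%nat by lia.
  replace (d + (k+1) + (k+1))%nat with (S (d+k+1+k))%nat by lia.
  replace (d + (k+1) + 2 - (k+1))%nat with (S (S d)) by lia.
  replace (d + (k+1) + 1 - k)%nat with (S (S d)) by lia.
  replace (d + (k+1) - (k+1))%nat with d by lia.
  replace (k+1)%nat with (S k) by lia.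
  rewrite !fS. simpl pow. set (F := INR (fact (d+k+1+k))). repeat rewrite ?plus_INR, ?S_INR. simpl INR.
  pose proof (INR_fact_neq_0 k). pose proof (INR_fact_neq_0 d).
  pose proof (INR_fact_neq_0 (d+1+k)). pose proof (pos_INR d). pose proof (pos_INR k).
  assert (2^k <> 0) by (apply pow_nonzero; lra).
  replace (d+1+k)%nat with (d+k+1)%nat in * by lia.
  field; repeat split; try lra.
Qed.

Lemma hank_b1 n : hank_a (n+2) (n+1) = (2*INR n+3) * hank_a (n+1) n.
Proof.
  unfold hank_a.
  replace (n+2+(n+1))%nat with (S (S (S (n+n))))%nat by lia.
  replace (n+1+n)%nat with (S (n+n))%nat by lia.
  replace (n+2-(n+1))%nat with 1%nat by lia.
  replace (n+1-n)%nat with 1%nat by lia.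
  replace (n+1)%nat with (S n) by lia.
  rewrite !fS. simpl pow. set (F := INR (fact (n+n))). repeat rewrite ?plus_INR, ?S_INR. simpl INR.
  pose proof (INR_fact_neq_0 n). pose proof (pos_INR n).
  assert (2^n <> 0) by (apply pow_nonzero; lra).
  field; repeat split; try lra.
Qed.

Lemma hank_b2 n : hank_a (n+2) (n+2) = (2*INR n+3) * hank_a (n+1) (n+1).
Proof.
  unfold hank_a.
  replace (n+2+(n+2))%nat with (S (S (S (S (n+n)))))%nat by lia.
  replace (n+1+(n+1))%nat with (S (S (n+n)))%nat by lia.
  replace (n+2-(n+2))%nat with 0%nat by lia.
  replace (n+1-(n+1))%nat with 0%nat by lia.
  replace (n+2)%nat with (S (S n)) by lia.
  replace (n+1)%nat with (S n) by lia.
  rewrite !fS. simpl pow. set (F := INR (fact (n+n))). repeat rewrite ?plus_INR, ?S_INR. simpl INR.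
  pose proof (INR_fact_neq_0 n). pose proof (pos_INR n).
  assert (2^n <> 0) by (apply pow_nonzero; lra).
  field; repeat split; try lra.
Qed.

Lemma hank_rec' n k : (S k <= n)%nat ->
  hank_a (S (S n)) (S k) = (2*INR n+3) * hank_a (S n) k + hank_a n (S k).
Proof. intros H. pose proof (hank_rec n k ltac:(lia)).
  replace (n+2)%nat with (S (S n)) in H0 by lia. replace (n+1)%nat with (S n) in H0 by lia.
  replace (k+1)%nat with (S k) in H0 by lia. exact H0. Qed.
Lemma hank_b1' n : hank_a (S (S n)) (S n) = (2*INR n+3) * hank_a (S n) n.
Proof. pose proof (hank_b1 n). replace (n+2)%nat with (S (S n)) in H by lia.
  replace (n+1)%nat with (S n) in H by lia. exact H. Qed.
Lemma hank_b2' n : hank_a (S (S n)) (S (S n)) = (2*INR n+3) * hank_a (S n) (S n).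
Proof. pose proof (hank_b2 n). replace (n+2)%nat with (S (S n)) in H by lia.
  replace (n+1)%nat with (S n) in H by lia. exact H. Qed.

Lemma P_rec n r : r <> 0 ->
  Pn (S (S n)) r = Cadd (Cscal ((2*INR n+3)/r) (Pn (S n) r)) (Cscal (-1) (Pn n r)).
Proof.
  intros Hr. set (c := (2*INR n+3)/r).
  rewrite <- (Csum_tt (S (S n)) r 0), <- (Csum_tt n r 2), <- (Csum_tt (S n) r 0).
  rewrite !Nat.add_0_r. replace (n+2)%nat with (S (S n)) by lia.
  set (sh := fun k => match k with O => Czero | S k' => Cscal c (ttm (S n) k' r) end).
  replace (Cscal c (Csum (fun k => ttm (S n) k r) (S n))) with (Csum sh (S (S n))).
  2:{ rewrite Csum_shift. simpl sh. rewrite Csum_scal. apply Cx_ext; simpl; ring. }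
  rewrite <- Csum_scal, <- Csum_add. apply Csum_ext. intros k Hk.
  assert (Hp : forall m, r ^ m <> 0) by (intro; apply pow_nonzero; auto).
  destruct k as [|k].
  - unfold sh, ttm. simpl Nat.leb. cbv iota. unfold term.
    replace (S (S n) + 1 - 0)%nat with (S (S (n+1))) by lia.
    replace (n + 1 - 0)%nat with (n+1)%nat by lia.
    rewrite Cpow_Cmi_2, !hank_a_0. apply Cx_ext; simpl; unfold c; field; auto.
  - unfold sh, ttm. destruct (Nat.leb_spec (S k) (S (S n))); [|lia].
    destruct (Nat.leb_spec k (S n)); [|lia]. unfold term.
    replace (S (S n) + 1 - S k)%nat with (S (S n) - k)%nat by lia.
    replace (S n + 1 - k)%nat with (S (S n) - k)%nat by lia.
    replace (S k + 1)%nat with (S (k + 1)) by lia. simpl pow.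
    destruct (Nat.leb_spec (S k) n).
    + replace (S (S n) - k)%nat with (S (S (n + 1 - S k))) by lia.
      rewrite Cpow_Cmi_2, hank_rec' by lia.
      apply Cx_ext; simpl; unfold c; field; auto.
    + assert (k = n \/ k = S n) as [-> | ->] by lia.
      * rewrite hank_b1'. apply Cx_ext; simpl; unfold c; field; auto.
      * rewrite hank_b2'. apply Cx_ext; simpl; unfold c; field; auto.
Qed.

Module Deriv.
From Coquelicot Require Import Coquelicot.

Definition hr n r := re (hankel1 n r).
Definition hi n r := im (hankel1 n r).

Lemma h_rec n r : r <> 0 ->
  hr (S (S n)) r = (2*INR n+3)/r * hr (S n) r - hr n r /\
  hi (S (S n)) r = (2*INR n+3)/r * hi (S n) r - hi n r.
Proof.
  intros Hr. unfold hr, hi. change (hankel1 (S (S n)) r) with (Cmul (Cexpi r) (Pn (S (S n)) r)).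
  change (hankel1 (S n) r) with (Cmul (Cexpi r) (Pn (S n) r)).
  change (hankel1 n r) with (Cmul (Cexpi r) (Pn n r)).
  rewrite P_rec by auto. simpl. split; ring.
Qed.

Lemma h0_eq r : r <> 0 -> hr 0 r = sin r / r /\ hi 0 r = - cos r / r.
Proof.
  intros Hr. unfold hr, hi, hankel1, Cexpi. simpl. unfold hank_a. simpl. split; field; auto.
Qed.

Lemma h1_eq r : r <> 0 -> hr 1 r = - cos r / r + sin r / r^2 /\ hi 1 r = - sin r / r - cos r / r^2.
Proof.
  intros Hr. unfold hr, hi, hankel1, Cexpi. simpl. unfold hank_a. simpl. split; field; auto.
Qed.

Lemma deriv_ext f g r l : (forall t, 0 < t -> f t = g t) -> 0 < r ->
  derivable_pt_lim g r l -> derivable_pt_lim f r l.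
Proof.
  intros H Hr D. apply is_derive_Reals in D. apply is_derive_Reals.
  apply (is_derive_ext_loc g f). 2: exact D.
  apply (filter_imp (fun t => 0 < t)). intros t Ht. symmetry. apply H, Ht.
  apply (open_gt 0 r Hr).
Qed.

Lemma step_gen (f0 f1 f2 f3 : R -> R) n r : 0 < r ->
  (forall t, 0 < t -> f2 t = (2*INR n+3)/t * f1 t - f0 t) ->
  (forall t, 0 < t -> f3 t = (2*INR (S n)+3)/t * f2 t - f1 t) ->
  derivable_pt_lim f0 r (INR n/r*f0 r - f1 r) ->
  derivable_pt_lim f1 r (INR (S n)/r * f1 r - f2 r) ->
  derivable_pt_lim f2 r (INR (S (S n))/r * f2 r - f3 r).
Proof.
  intros Hr E2 E3 D0 D1.
  apply (deriv_ext _ (fun t => (2*INR n+3)/t * f1 t - f0 t)); [exact E2|exact Hr|].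
  apply is_derive_Reals in D0. apply is_derive_Reals in D1. apply is_derive_Reals.
  auto_derive.
  - repeat split; try (eexists; eassumption). lra.
  - replace (Derive (fun x:R => f1 x) r) with (INR (S n)/r*f1 r - f2 r) by (symmetry; apply is_derive_unique; exact D1).
    replace (Derive (fun x:R => f0 x) r) with (INR n/r*f0 r - f1 r) by (symmetry; apply is_derive_unique; exact D0).
    rewrite (E3 r Hr), (E2 r Hr). rewrite !S_INR. field. lra.
Qed.

Lemma D01 r : 0 < r ->
  (derivable_pt_lim (hr 0) r (INR 0/r*hr 0 r - hr 1 r) /\
   derivable_pt_lim (hi 0) r (INR 0/r*hi 0 r - hi 1 r)) /\
  (derivable_pt_lim (hr 1) r (INR 1/r*hr 1 r - hr 2 r) /\
   derivable_pt_lim (hi 1) r (INR 1/r*hi 1 r - hi 2 r)).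
Proof.
  intros Hr. assert (Hr' : r <> 0) by lra.
  destruct (h0_eq r Hr') as [a b]. destruct (h1_eq r Hr') as [c d].
  destruct (h_rec 0 r Hr') as [e f].
  rewrite e, f, a, b, c, d. simpl INR. repeat split.
  - apply (deriv_ext _ (fun t => sin t / t)); [intros; apply h0_eq; lra|auto|].
    apply is_derive_Reals. auto_derive. lra. field. lra.
  - apply (deriv_ext _ (fun t => - cos t / t)); [intros; apply h0_eq; lra|auto|].
    apply is_derive_Reals. auto_derive. lra. field. lra.
  - apply (deriv_ext _ (fun t => - cos t / t + sin t / t^2)); [intros; apply h1_eq; lra|auto|].
    apply is_derive_Reals. auto_derive. repeat split; intro Hc; nra. field. lra.
  - apply (deriv_ext _ (fun t => - sin t / t - cos t / t^2)); [intros; apply h1_eq; lra|auto|].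
    apply is_derive_Reals. auto_derive. repeat split; intro Hc; nra. field. lra.
Qed.

Lemma Dall n : forall r, 0 < r ->
  (derivable_pt_lim (hr n) r (INR n/r*hr n r - hr (S n) r) /\
   derivable_pt_lim (hi n) r (INR n/r*hi n r - hi (S n) r)) /\
  (derivable_pt_lim (hr (S n)) r (INR (S n)/r*hr (S n) r - hr (S (S n)) r) /\
   derivable_pt_lim (hi (S n)) r (INR (S n)/r*hi (S n) r - hi (S (S n)) r)).
Proof.
  induction n; intros r Hr. apply D01, Hr.
  destruct (IHn r Hr) as [[A B] [C D]]. split. split; assumption.
  split.
  - apply (step_gen (hr n) (hr (S n))); auto.
    + intros t Ht. apply h_rec. lra.
    + intros t Ht. apply h_rec. lra.
  - apply (step_gen (hi n) (hi (S n))); auto.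
    + intros t Ht. apply h_rec. lra.
    + intros t Ht. apply h_rec. lra.
Qed.
End Deriv.
Import Deriv.





Definition s (n j : nat) : R :=
  if (j <=? n)%nat then INR (fact (2*j)) * INR (fact (n+j)) /
      (4^j * INR (fact j)^2 * INR (fact (n-j))) else 0.

Lemma s_0 n : s n 0 = 1.
Proof. unfold s. simpl Nat.leb. cbv iota. rewrite Nat.add_0_r, Nat.sub_0_r. simpl.
  field. apply INR_fact_neq_0. Qed.

Lemma s_big n j : (n < j)%nat -> s n j = 0.
Proof. intros H. unfold s. destruct (Nat.leb_spec j n); [lia|reflexivity]. Qed.

Lemma s_nonneg n j : 0 <= s n j.
Proof.
  unfold s. destruct (Nat.leb_spec j n); [|lra].
  pose proof (lt_INR_0 _ (lt_O_fact (2*j))). pose proof (lt_INR_0 _ (lt_O_fact (n+j))).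
  pose proof (lt_INR_0 _ (lt_O_fact j)). pose proof (lt_INR_0 _ (lt_O_fact (n-j))).
  assert (0 < 4^j) by (apply pow_lt; lra).
  apply Rlt_le. apply Rdiv_lt_0_compat. nra.
  apply Rmult_lt_0_compat. apply Rmult_lt_0_compat. auto. apply pow_lt; auto. auto.
Qed.

Ltac finish := repeat rewrite ?fS; simpl pow; repeat rewrite ?plus_INR, ?mult_INR, ?S_INR; simpl INR.

Lemma s_i n j : (INR n + 1 - INR j) * s (S n) j = (INR n + 1 + INR j) * s n j.
Proof.
  destruct (Compare_dec.le_lt_dec j n) as [H|H].
  - destruct (Nat.le_exists_sub j n H) as [d [-> _]].
    unfold s. destruct (Nat.leb_spec j (S (d+j))); [|lia].
    destruct (Nat.leb_spec j (d+j)); [|lia].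
    replace (S (d+j) + j)%nat with (S (d+j+j)) by lia.
    replace (S (d+j) - j)%nat with (S d) by lia.
    replace (d+j-j)%nat with d by lia.
    rewrite !fS. generalize (INR (fact (2*j))) (INR (fact (d+j+j))); intros F G.
    pose proof (INR_fact_neq_0 j). pose proof (INR_fact_neq_0 d). pose proof (pos_INR d).
    assert (4^j <> 0) by (apply pow_nonzero; lra).
    repeat rewrite ?plus_INR. field. repeat split; auto; lra.
  - destruct (Nat.eq_dec j (S n)) as [->|Hn].
    + rewrite S_INR, (s_big n (S n)) by lia. ring.
    + rewrite !s_big by lia. ring.
Qed.

Lemma s_ii n j : s (S (S n)) (S j) = (2*INR n+3)*(2*INR j+1) * s (S n) j + s n (S j).
Proof.
  destruct (Compare_dec.le_lt_dec (S j) n) as [H|H].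
  - destruct (Nat.le_exists_sub (S j) n H) as [d [-> _]].
    unfold s.
    destruct (Nat.leb_spec (S j) (S (S (d + S j)))); [|lia].
    destruct (Nat.leb_spec j (S (d + S j))); [|lia].
    destruct (Nat.leb_spec (S j) (d + S j)); [|lia].
    replace (2 * S j)%nat with (S (S (2*j))) by lia.
    replace (S (S (d + S j)) + S j)%nat with (S (S (S (S (d+j+j)))))%nat by lia.
    replace (S (d + S j) + j)%nat with (S (S (d+j+j)))%nat by lia.
    replace (d + S j + S j)%nat with (S (S (d+j+j)))%nat by lia.
    replace (S (S (d + S j)) - S j)%nat with (S (S d)) by lia.
    replace (S (d + S j) - j)%nat with (S (S d)) by lia.
    replace (d + S j - S j)%nat with d by lia.
    rewrite !fS. generalize (INR (fact (2*j))) (INR (fact (d+j+j))); intros F G.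
    pose proof (INR_fact_neq_0 j). pose proof (INR_fact_neq_0 d). pose proof (pos_INR d).
    pose proof (pos_INR j).
    assert (4^j <> 0) by (apply pow_nonzero; lra).
    simpl pow. repeat rewrite ?plus_INR, ?mult_INR, ?S_INR. simpl INR.
    field. repeat split; auto; lra.
  - destruct (Nat.eq_dec j n) as [->|Hn].
    + rewrite (s_big n (S n)) by lia. unfold s.
      destruct (Nat.leb_spec (S n) (S (S n))); [|lia]. destruct (Nat.leb_spec n (S n)); [|lia].
      replace (2 * S n)%nat with (S (S (2*n))) by lia.
      replace (S (S n) + S n)%nat with (S (S (S (n+n))))%nat by lia.
      replace (S n + n)%nat with (S (n+n))%nat by lia.
      replace (2 * n)%nat with (n+n)%nat by lia.
      replace (S (S n) - S n)%nat with 1%nat by lia.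
      replace (S n - n)%nat with 1%nat by lia.
      rewrite !fS. generalize (INR (fact (n+n))); intros G.
      pose proof (INR_fact_neq_0 n). pose proof (pos_INR n).
      assert (4^n <> 0) by (apply pow_nonzero; lra).
      simpl pow. repeat rewrite ?plus_INR, ?mult_INR, ?S_INR. simpl INR.
      field. repeat split; auto; lra.
    + destruct (Nat.eq_dec j (S n)) as [->|Hn2].
      * rewrite (s_big n (S (S n))) by lia. unfold s.
        destruct (Nat.leb_spec (S (S n)) (S (S n))); [|lia]. destruct (Nat.leb_spec (S n) (S n)); [|lia].
        replace (2 * S (S n))%nat with (S (S (S (S (n+n))))) by lia.
        replace (S (S n) + S (S n))%nat with (S (S (S (S (n+n)))))%nat by lia.
        replace (S n + S n)%nat with (S (S (n+n)))%nat by lia.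
        replace (2 * S n)%nat with (S (S (n+n)))%nat by lia.
        replace (S (S n) - S (S n))%nat with 0%nat by lia.
        replace (S n - S n)%nat with 0%nat by lia.
        rewrite !fS. generalize (INR (fact (n+n))); intros G.
        pose proof (INR_fact_neq_0 n). pose proof (pos_INR n).
        assert (4^n <> 0) by (apply pow_nonzero; lra).
        repeat rewrite ?plus_INR, ?mult_INR, ?S_INR. simpl pow. change (fact 0) with 1%nat. rewrite ?INR_0, ?INR_1.
        field. repeat split; auto; lra.
      * rewrite !s_big by lia. ring.
Qed.


Definition Sp n x := sum_f_R0 (fun j => s n j * x^j) n.
Definition Fp n x := sum_f_R0 (fun j => (INR j + INR n + 1) * s n j * x^j) n.

Lemma sum_ext0 f n m : (forall j, (n < j)%nat -> f j = 0) -> sum_f_R0 f (n+m) = sum_f_R0 f n.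
Proof.
  intros H. induction m. rewrite Nat.add_0_r. reflexivity.
  rewrite Nat.add_succ_r. simpl. rewrite IHm, H by lia. ring.
Qed.

Lemma sum_lin f g a b N : sum_f_R0 (fun j => a * f j + b * g j) N = a * sum_f_R0 f N + b * sum_f_R0 g N.
Proof. induction N; simpl. ring. rewrite IHN. ring. Qed.

Lemma sum_nonneg_le f N : (forall j, (j <= N)%nat -> 0 <= f j) -> 0 <= sum_f_R0 f N.
Proof. induction N; intros H; simpl. apply H; lia. pose proof (H (S N) (le_n _)).
  assert (0 <= sum_f_R0 f N) by (apply IHN; intros; apply H; lia). lra. Qed.

Lemma sum_first f N : sum_f_R0 f N = f 0%nat + sum_f_R0 (fun j => if (j =? 0)%nat then 0 else f j) N.
Proof. induction N; simpl. ring. rewrite IHN. ring. Qed.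

Lemma sum_shift f N : sum_f_R0 f (S N) = f 0%nat + sum_f_R0 (fun j => f (S j)) N.
Proof. induction N. simpl. ring. change (sum_f_R0 f (S (S N))) with (sum_f_R0 f (S N) + f (S (S N))).
  rewrite IHN. simpl. ring. Qed.

Lemma I1 n x : Fp (S n) x = (2*INR n+3) * Sp (S n) x - Fp n x.
Proof.
  unfold Fp, Sp. rewrite <- (sum_ext0 (fun j => (INR j + INR n + 1) * s n j * x^j) n 1).
  2:{ intros j Hj. rewrite s_big by lia. ring. }
  replace (n+1)%nat with (S n) by lia.
  replace ((2 * INR n + 3) * sum_f_R0 (fun j => s (S n) j * x ^ j) (S n) -
   sum_f_R0 (fun j => (INR j + INR n + 1) * s n j * x ^ j) (S n)) with
   ((2 * INR n + 3) * sum_f_R0 (fun j => s (S n) j * x ^ j) (S n) +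
   (-1) * sum_f_R0 (fun j => (INR j + INR n + 1) * s n j * x ^ j) (S n)) by ring.
  rewrite <- sum_lin. apply sum_eq. intros j _.
  pose proof (f_equal (fun t => t * x^j) (s_i n j)) as H. simpl in H. rewrite S_INR. lra.
Qed.

Lemma I2 n x : Sp (S (S n)) x =
  (2*INR n+3)^2 * x * Sp (S n) x - 2*(2*INR n+3) * x * Fp n x + Sp n x.
Proof.
  unfold Fp, Sp.
  rewrite <- (sum_ext0 (fun j => (INR j + INR n + 1) * s n j * x^j) n 1).
  2:{ intros j Hj. rewrite s_big by lia. ring. }
  rewrite <- (sum_ext0 (fun j => s n j * x^j) n 2).
  2:{ intros j Hj. rewrite s_big by lia. ring. }
  replace (n+1)%nat with (S n) by lia. replace (n+2)%nat with (S (S n)) by lia.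
  rewrite (sum_shift (fun j => s (S (S n)) j * x^j)), (sum_shift (fun j => s n j * x^j)).
  assert (P : forall j, s (S (S n)) (S j) * x^(S j) = (2*INR n+3)^2 * x * (s (S n) j * x^j)
     - 2*(2*INR n+3)*x*((INR j + INR n+1)* s n j * x^j) + s n (S j) * x^(S j)).
  { intros j. rewrite s_ii. pose proof (s_i n j) as H.
    simpl pow.
    assert (K : (INR j + INR n+1)* s n j * (x*x^j) = (INR n+1-INR j)*s (S n) j*(x*x^j)).
    { transitivity ((INR n + 1 + INR j) * s n j * (x*x^j)). ring. rewrite <- H. ring. }
    replace (2*(2*INR n+3)*x*((INR j + INR n+1)* s n j * x^j)) with
      (2*(2*INR n+3)*((INR j + INR n+1)* s n j * (x*x^j))) by ring.
    rewrite K. ring. }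
  assert (Hs : forall N, sum_f_R0 (fun j => s (S (S n)) (S j) * x^(S j)) N =
     (2*INR n+3)^2 * x * sum_f_R0 (fun j => s (S n) j * x^j) N
     - 2*(2*INR n+3)*x*sum_f_R0 (fun j => (INR j + INR n+1)* s n j * x^j) N
     + sum_f_R0 (fun j => s n (S j) * x^(S j)) N).
  { induction N; cbn [sum_f_R0]. rewrite P; ring. rewrite IHN, P; ring. }
  rewrite Hs, !s_0. ring.
Qed.

Lemma Sp_ge1 n x : 0 <= x -> 1 <= Sp n x.
Proof.
  intros Hx. unfold Sp. rewrite sum_first, s_0. simpl pow.
  assert (0 <= sum_f_R0 (fun j => if (j =? 0)%nat then 0 else s n j * x ^ j) n).
  { apply sum_nonneg_le. intros j _. destruct (j =? 0)%nat. lra.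
    apply Rmult_le_pos. apply s_nonneg. apply pow_le; auto. }
  lra.
Qed.

Lemma G_ge n x : 0 <= x -> Fp n x - (INR n + 2) * Sp n x + 1 >= 0.
Proof.
  intros Hx.
  assert (E : Fp n x - (INR n + 2) * Sp n x = sum_f_R0 (fun j => (INR j - 1) * s n j * x^j) n).
  { unfold Fp, Sp. assert (HN : forall N, sum_f_R0 (fun j => (INR j + INR n + 1) * s n j * x^j) N
       - (INR n + 2) * sum_f_R0 (fun j => s n j * x^j) N = sum_f_R0 (fun j => (INR j - 1) * s n j * x^j) N).
    { induction N; cbn [sum_f_R0]. ring. rewrite <- IHN. ring. } apply HN. }
  rewrite E, sum_first, s_0. simpl INR. simpl pow.
  assert (0 <= sum_f_R0 (fun j => if (j =? 0)%nat then 0 else (INR j - 1) * s n j * x ^ j) n).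
  { apply sum_nonneg_le. intros j _. destruct j. simpl. lra. simpl Nat.eqb. cbv iota.
    apply Rmult_le_pos. apply Rmult_le_pos. rewrite S_INR. pose proof (pos_INR j). lra.
    apply s_nonneg. apply pow_le; auto. }
  lra.
Qed.

Lemma Fp_le n x : 0 <= x -> Fp n x <= (2*INR n+1) * Sp n x.
Proof.
  intros Hx.
  assert (E : (2*INR n+1) * Sp n x - Fp n x = sum_f_R0 (fun j => (INR n - INR j) * s n j * x^j) n).
  { unfold Fp, Sp. assert (HN : forall N, (2*INR n+1) * sum_f_R0 (fun j => s n j * x^j) N
       - sum_f_R0 (fun j => (INR j + INR n + 1) * s n j * x^j) N = sum_f_R0 (fun j => (INR n - INR j) * s n j * x^j) N).
    { induction N; cbn [sum_f_R0]. ring. rewrite <- IHN. ring. } apply HN. }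
  assert (0 <= sum_f_R0 (fun j => (INR n - INR j) * s n j * x^j) n).
  { apply sum_nonneg_le. intros j Hj. apply Rmult_le_pos. apply Rmult_le_pos.
    apply le_INR in Hj. lra. apply s_nonneg. apply pow_le; auto. }
  lra.
Qed.


Definition Inv n r :=
  r^2 * (hr n r^2 + hi n r^2) = Sp n (/r^2) /\
  r^2 * (hr (S n) r^2 + hi (S n) r^2) = Sp (S n) (/r^2) /\
  r^2 * (hr (S n) r * hr n r + hi (S n) r * hi n r) = /r * Fp n (/r^2) /\
  r^2 * (hi (S n) r * hr n r - hr (S n) r * hi n r) = -1.

Lemma Inv0 r : 0 < r -> Inv 0 r.
Proof.
  intros Hr. assert (Hr' : r <> 0) by lra.
  destruct (h0_eq r Hr') as [a b]. destruct (h1_eq r Hr') as [c d].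
  unfold Inv. rewrite a, b, c, d. unfold Sp, Fp. simpl sum_f_R0. rewrite !s_0.
  assert (s 1 1 = 1) by (unfold s; simpl; field).
  rewrite H. pose proof (sin2_cos2 r) as E. unfold Rsqr in E. simpl INR.
  assert (E2 : sin r ^ 2 = 1 - cos r ^ 2) by nra.
  repeat split; field_simplify; auto; rewrite ?E2; field; auto.
Qed.

Lemma Inv_step n r : 0 < r -> Inv n r -> Inv (S n) r.
Proof.
  intros Hr [H1 [H2 [H3 H4]]]. assert (Hr' : r <> 0) by lra.
  destruct (h_rec n r Hr') as [e f].
  assert (HF : Fp n (/r^2) = r^3 * (hr (S n) r * hr n r + hi (S n) r * hi n r)).
  { rewrite <- (Rmult_1_l (Fp n _)), <- (Rinv_r r Hr'), Rmult_assoc, <- H3. field; auto. }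
  unfold Inv. repeat split.
  - exact H2.
  - rewrite I2, <- H1, <- H2, HF, e, f. field; auto.
  - rewrite I1, <- H2, HF, e, f. field; auto.
  - rewrite e, f. replace (-1) with (r^2 * (hi (S n) r * hr n r - hr (S n) r * hi n r)) by exact H4.
    field; auto.
Qed.

Lemma Inv_all n r : 0 < r -> Inv n r.
Proof. intros Hr. induction n. apply Inv0, Hr. apply Inv_step; auto. Qed.


Lemma sqrt_ge a Q : 0 <= a -> a^2 <= Q -> a <= sqrt Q.
Proof. intros. rewrite <- (sqrt_pow2 a) by auto. apply sqrt_le_1_alt. auto. Qed.

Lemma sqrt_le a Q : 0 <= a -> Q <= a^2 -> sqrt Q <= a.
Proof. intros. rewrite <- (sqrt_pow2 a) by auto. apply sqrt_le_1_alt. auto. Qed.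

Lemma div_le k m c : 0 < k -> 0 < c -> c <= m -> k / m <= k / c.
Proof. intros. unfold Rdiv. apply Rmult_le_compat_l. lra. apply Rinv_le_contravar; auto. Qed.

Lemma sqrt2_ge1 : 1 <= sqrt 2.
Proof. rewrite <- sqrt_1. apply sqrt_le_1_alt. lra. Qed.

Lemma bounds1 nn k S F re im : 0 <= nn -> 1 <= k -> 1 <= S -> F - (nn+2)*S + 1 >= 0 ->
  F <= (2*nn+1)*S -> re = nn + 1 - F/S -> im = k/S ->
  0 < sqrt (re^2 + im^2) /\ -re <= sqrt (re^2 + im^2) /\
  k / sqrt (re^2 + im^2) <= 2 * sqrt 2 * k /\ sqrt (re^2 + im^2) / k <= 1 + nn / k.
Proof.
  intros Hn Hk HS HF1 HF2 Hre Him.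
  assert (HG1 : -re*S = F - (nn+1)*S) by (rewrite Hre; field; lra).
  assert (Him' : im * S = k) by (rewrite Him; field; lra).
  assert (G0 : 0 <= -re).
  { destruct (Rle_or_lt 0 (-re)); auto. assert (-re*S < 0) by (rewrite Ropp_mult_distr_l_reverse; apply Ropp_lt_gt_0_contravar, Rmult_lt_0_compat; lra). lra. }
  assert (G1 : -re <= nn).
  { destruct (Rle_or_lt (-re) nn); auto. assert ((-re - nn)*S > 0) by (apply Rmult_lt_0_compat; lra). lra. }
  assert (I0 : 0 <= im).
  { destruct (Rle_or_lt 0 im); auto. assert (0 < -im*S) by (apply Rmult_lt_0_compat; lra). lra. }
  assert (I1 : im <= k).
  { destruct (Rle_or_lt im k); auto. assert ((im - k)*S > 0) by (apply Rmult_lt_0_compat; lra). nra. }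
  assert (Q1 : (re^2 + im^2) * S^2 >= S^2/2).
  { assert (A1 : -re*S >= S - 1) by lra.
    assert (A2 : (-re*S)^2 >= (S-1)^2) by (apply Rle_ge, pow_incr; lra).
    assert (A3 : (im*S)^2 >= 1) by (rewrite Him'; nra).
    assert (A4 : (re^2 + im^2) * S^2 = (-re*S)^2 + (im*S)^2) by ring.
    rewrite A4. pose proof (pow2_ge_0 (S-2)). nra. }
  assert (Q2 : (1/2)^2 <= re^2 + im^2).
  { assert (0 < S^2) by nra. nra. }
  assert (M : 1/2 <= sqrt (re^2+im^2)) by (apply sqrt_ge; lra).
  pose proof sqrt2_ge1.
  repeat split.
  - lra.
  - apply sqrt_ge. lra. nra.
  - apply Rle_trans with (k / (1/2)). apply div_le; lra.
    replace (k / (1/2)) with (2 * k) by field. nra.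
  - assert (sqrt (re^2+im^2) <= nn + k) by (apply sqrt_le; nra).
    replace (1 + nn/k) with ((nn + k)/k) by (field; lra).
    unfold Rdiv. apply Rmult_le_compat_r. apply Rlt_le, Rinv_0_lt_compat. lra. auto.
Qed.

Lemma bounds_low nn k S S' F' re : 1 <= nn -> 1 <= k -> 1 <= S -> 1 <= S' -> nn*S' <= F' ->
  S*S' = (F'/k)^2 + 1 -> -re = nn - F'/S -> nn - k^2/nn <= -re.
Proof.
  intros Hn Hk HS HS' HF E Hre. rewrite Hre.
  assert (E' : k^2 * S * S' = F'^2 + k^2) by (rewrite Rmult_assoc, E; field; lra).
  assert (K : F' * nn <= k^2 * S).
  { assert (A : F'*(nn*S') <= F'*F') by (apply Rmult_le_compat_l; nra).
    apply (Rmult_le_reg_r S'). lra. nra. }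
  assert (F'/S <= k^2/nn).
  { apply (Rmult_le_reg_r (S*nn)). nra. replace (F'/S*(S*nn)) with (F'*nn) by (field; lra).
    replace (k^2/nn*(S*nn)) with (k^2*S) by (field; lra). lra. }
  lra.
Qed.

Lemma fin_c l0 lam k nn m : l0 > 1 -> lam >= l0 -> k >= 1 -> nn >= 1 -> nn >= lam*k ->
  nn - k^2/nn <= m -> k/m <= 2*l0^2/(l0^2-1) * (k/(nn+1)).
Proof.
  intros Hl Hlam Hk Hn H Hm.
  assert (L2 : l0^2 > 1) by (simpl; nra).
  assert (A : k*l0 <= nn) by nra.
  assert (B : k^2/nn <= nn/l0^2).
  { apply (Rmult_le_reg_r (nn*l0^2)). nra.
    replace (k^2/nn*(nn*l0^2)) with ((k*l0)^2) by (field; lra).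
    replace (nn/l0^2*(nn*l0^2)) with (nn^2) by (field; nra).
    apply pow_incr. nra. }
  set (c := (nn+1)*(l0^2-1)/(2*l0^2)).
  assert (Hc0 : 0 < c) by (unfold c; apply Rdiv_lt_0_compat; [apply Rmult_lt_0_compat|]; lra).
  assert (Hc : c <= m).
  { assert (c <= nn - nn/l0^2).
    { unfold c. apply (Rmult_le_reg_r (2*l0^2)). nra.
      replace ((nn+1)*(l0^2-1)/(2*l0^2)*(2*l0^2)) with ((nn+1)*(l0^2-1)) by (field; nra).
      replace ((nn - nn/l0^2)*(2*l0^2)) with (2*nn*(l0^2-1)) by (field; nra). nra. }
    lra. }
  apply Rle_trans with (k/c). apply div_le; lra.
  unfold c. right. field. repeat split; nra.
Qed.

Lemma fin_b l0 lam k nn m : l0 > 1 -> lam >= l0 -> k >= 1 -> nn >= 2 -> nn > lam*k^2 ->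
  nn - k^2/nn <= m -> k/m <= 2*sqrt 2*(2/l0+1) * (k/(nn+1)).
Proof.
  intros Hl Hlam Hk Hn H Hm.
  set (t := /l0). assert (Ht0 : 0 < t) by (apply Rinv_0_lt_compat; lra).
  assert (Ht1 : t < 1) by (unfold t; rewrite <- Rinv_1; apply Rinv_lt_contravar; lra).
  assert (B : k^2/nn <= t).
  { apply (Rmult_le_reg_r (nn*l0)). nra.
    replace (k^2/nn*(nn*l0)) with (k^2*l0) by (field; lra).
    replace (t*(nn*l0)) with nn by (unfold t; field; lra). nra. }
  pose proof sqrt2_ge1.
  set (c := (nn+1)/(2*sqrt 2*(2*t+1))).
  assert (Hc0 : 0 < c) by (unfold c; apply Rdiv_lt_0_compat; nra).
  assert (Hc : c <= m).
  { assert (c <= nn - t).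
    { unfold c. apply (Rmult_le_reg_r (2*sqrt 2*(2*t+1))). nra.
      replace ((nn+1)/(2*sqrt 2*(2*t+1))*(2*sqrt 2*(2*t+1))) with (nn+1) by (field; nra).
      assert ((2*t+1)*(nn-t) >= nn) by nra.
      assert (2*sqrt 2*(2*t+1)*(nn-t) >= 2*(2*t+1)*(nn-t)) by nra. nra. }
    lra. }
  apply Rle_trans with (k/c). apply div_le; lra.
  unfold c, t. right. field. repeat split; nra.
Qed.


Theorem lemma5p2 :
  forall lambda0 : R, lambda0 > 1 ->
  exists C0 : R, C0 > 0 /\
  forall (lambda k : R), lambda >= lambda0 -> k >= 1 ->
  forall (n : nat) (dre dim : R),
    derivable_pt_lim (fun r => re (hankel1 n r)) k dre ->
    derivable_pt_lim (fun r => im (hankel1 n r)) k dim ->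
    let z := zn_of n k (mkCx dre dim) in
    let m := Cmod (Cadd z Cone) in
    k / m <= 2 * sqrt 2 * k /\
    (INR n > lambda * k ^ 2 ->
       k / m <= 2 * sqrt 2 * (2 / lambda0 + 1) * (k / (INR n + 1))) /\
    (INR n >= lambda * k -> k / m <= C0 * (k / (INR n + 1))) /\
    m / k <= 1 + INR n / k.
Proof.
  intros l0 Hl0. exists (2*l0^2/(l0^2-1)). split.
  { assert (l0^2 > 1) by (simpl; nra). apply Rdiv_lt_0_compat; nra. }
  intros lam k Hlam Hk n dre dim Dre Dim z m.
  assert (Hk0 : 0 < k) by lra. assert (Hk' : k <> 0) by lra.
  destruct (Dall n k Hk0) as [[Dr Di] _].
  assert (Edre : dre = INR n / k * hr n k - hr (S n) k) by (eapply uniqueness_limite; [exact Dre | exact Dr]).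
  assert (Edim : dim = INR n / k * hi n k - hi (S n) k) by (eapply uniqueness_limite; [exact Dim | exact Di]).
  destruct (Inv_all n k Hk0) as [H1 [H2 [H3 H4]]].
  assert (Hx : 0 <= /k^2) by (apply Rlt_le, Rinv_0_lt_compat, pow_lt; lra).
  pose proof (Sp_ge1 n _ Hx) as HS.
  pose proof (G_ge n _ Hx) as HG. pose proof (Fp_le n _ Hx) as HFl.
  assert (HF : Fp n (/k^2) = k^3 * (hr (S n) k * hr n k + hi (S n) k * hi n k)).
  { rewrite <- (Rmult_1_l (Fp n _)), <- (Rinv_r k Hk'), Rmult_assoc, <- H3. field; auto. }
  assert (HH : hr n k ^ 2 + hi n k ^ 2 <> 0).
  { intro E. rewrite E in H1. lra. }
  assert (Hre : re (Cadd z Cone) = INR n + 1 - Fp n (/k^2) / Sp n (/k^2)).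
  { unfold z, zn_of, Cinv, Cadd, Cscal, Cmul, Cone. cbn [re im]. fold (hr n k) (hi n k). rewrite Edre, Edim, HF, <- H1.
    field; auto. }
  assert (Him : im (Cadd z Cone) = k / Sp n (/k^2)).
  { unfold z, zn_of, Cinv, Cadd, Cscal, Cmul, Cone. cbn [re im]. fold (hr n k) (hi n k). rewrite Edre, Edim, <- H1.
    assert (E : hi (S n) k * hr n k - hr (S n) k * hi n k = -1/k^2).
    { rewrite <- H4. field. auto. }
    transitivity (k * (-(hi (S n) k * hr n k - hr (S n) k * hi n k)) / (hr n k ^ 2 + hi n k ^ 2)).
    field. auto. rewrite E. field. auto. }
  pose proof (bounds1 (INR n) k _ _ _ _ (pos_INR n) ltac:(lra) HS HG HFl Hre Him) as [Mpos [Mre [Ma Md]]].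
  unfold m, Cmod.
  set (M := sqrt (re (Cadd z Cone) ^ 2 + im (Cadd z Cone) ^ 2)) in *.
  assert (Hlk : lam * k > 0) by nra. assert (Hlk2 : lam * k^2 > 0) by (simpl; nra).
  destruct n as [|n'].
  { simpl INR in *. repeat split; auto; intros; lra. }
  assert (Low : INR (S n') - k^2/INR (S n') <= M).
  { destruct (Inv_all n' k Hk0) as [J1 [J2 [J3 J4]]].
    pose proof (Sp_ge1 n' _ Hx) as HS'. pose proof (G_ge n' _ Hx) as HG'.
    assert (HF' : Fp n' (/k^2) = k^3*(hr (S n') k * hr n' k + hi (S n') k * hi n' k)).
    { rewrite <- (Rmult_1_l (Fp n' _)), <- (Rinv_r k Hk'), Rmult_assoc, <- J3. field; auto. }
    assert (Prod : Sp (S n') (/k^2) * Sp n' (/k^2) = (Fp n' (/k^2) / k)^2 + 1).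
    { rewrite <- H1, <- J1, HF'.
      replace 1 with ((k^2*(hi (S n') k * hr n' k - hr (S n') k * hi n' k))^2) by (rewrite J4; ring).
      field; auto. }
    assert (Hnr : - re (Cadd z Cone) = INR (S n') - Fp n' (/k^2) / Sp (S n') (/k^2)).
    { rewrite Hre, I1, S_INR. field. lra. }
    assert (HnS : INR (S n') * Sp n' (/k^2) <= Fp n' (/k^2)) by (rewrite S_INR; lra).
    pose proof (bounds_low (INR (S n')) k _ _ _ _ ltac:(rewrite S_INR; pose proof (pos_INR n'); lra)
       ltac:(lra) HS HS' HnS Prod Hnr). lra. }
  repeat split; auto.
  - intros Hb. apply (fin_b l0 lam k (INR (S n')) M); auto; try lra.
    destruct n' as [|n'']. simpl in Hb. assert (lam*k^2 >= 1) by (simpl; nra). lra.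
    rewrite !S_INR. pose proof (pos_INR n''). lra.
  - intros Hc. apply (fin_c l0 lam k (INR (S n')) M); auto; try lra.
    rewrite S_INR. pose proof (pos_INR n'). lra.
Qed.
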